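(* Let $N>0$, $m>0$, $F>0$, $\alpha>0$, $w>0$ be fixed with $Nm>\alpha$, and for $g\geq 0$, $\tau\in(0,1)$, $L_g\geq 0$ define \[ L=\frac{N\left[(1-\tau)(mL_g+\alpha F)+(mg+F)mN\right]}{\alpha+(Nm-\alpha)\tau},\qquad q=\frac{(1-\tau)(L+L_g-\alpha g)}{\left(Nm+\alpha(1-\tau)\right)(L+L_g)}, \] \[ p=\frac{L+L_g}{L+L_g-\alpha g}\left(mw+\frac{\alpha(1-\tau)w}{N}\right),\qquad \Pi=\left((L+L_g)q+g\right)(p-mw)-Fw, \] regarded as functions of $(g,\tau,L_g)$. Then \[ \frac{\partial \Pi}{\partial g}>0,\qquad \frac{\partial \Pi}{\partial \tau}<0 . \]
   Context: These are the symmetric-equilibrium private employment $L$, per-capita consumption $q$ of each variety, price $p$, and profit $\Pi$ of each firm in a monopolistic-competition general equilibrium model with a measure $N$ of firms, marginal and fixed labor inputs $m$ and $F$, CARA utility parameter $\alpha$, nominal wage $w$, income tax rate $\tau$, government purchase $g$ of each variety, and government employment $L_g$. Partial derivatives are taken in $(g,\tau,L_g)$ with other parameters fixed. *)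

(* Defs.v *)
From Stdlib Require Import Reals.
From Coquelicot Require Import Coquelicot.
Open Scope R_scope.

Definition Lpriv (N m F alpha : R) (g tau Lg : R) : R :=
  N * ((1 - tau) * (m * Lg + alpha * F) + (m * g + F) * m * N)
  / (alpha + (N * m - alpha) * tau).

Definition qcons (N m F alpha : R) (g tau Lg : R) : R :=
  let L := Lpriv N m F alpha g tau Lg in
  (1 - tau) * (L + Lg - alpha * g)
  / ((N * m + alpha * (1 - tau)) * (L + Lg)).

Definition price (N m F alpha w : R) (g tau Lg : R) : R :=
  let L := Lpriv N m F alpha g tau Lg in
  (L + Lg) / (L + Lg - alpha * g) * (m * w + alpha * (1 - tau) * w / N).

Definition profit (N m F alpha w : R) (g tau Lg : R) : R :=
  let L := Lpriv N m F alpha g tau Lg in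
  ((L + Lg) * qcons N m F alpha g tau Lg + g)
    * (price N m F alpha w g tau Lg - m * w) - F * w.

(* Main.v *)
Require Import Defs.
From Stdlib Require Import Reals Lra Psatz.
From Coquelicot Require Import Coquelicot.
Open Scope R_scope.

Lemma profit_closed N m F alpha w g tau Lg :
  N <> 0 ->
  alpha + (N*m-alpha)*tau <> 0 ->
  N*m + alpha*(1-tau) <> 0 ->
  (N*m + alpha*(1-tau))*(Lg+N*F) + N*N*m*m*g <> 0 ->
  (Lg + N*F) + (N*m-alpha)*g <> 0 ->
  profit N m F alpha w g tau Lg =
  w*alpha*((1-tau)*(Lg+N*F) + N*m*g)^2
   / (N*((Lg + N*F) + (N*m-alpha)*g)*(alpha + (N*m-alpha)*tau)) - F*w.
Proof.
  intros HN HE HK HS HB.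
  unfold profit, price, qcons.
  set (L := Lpriv N m F alpha g tau Lg).
  assert (HS' : L + Lg = ((N*m + alpha*(1-tau))*(Lg+N*F) + N*N*m*m*g)/(alpha + (N*m-alpha)*tau)).
  { unfold L, Lpriv. field. exact HE. }
  assert (HD' : L + Lg - alpha*g = (N*m + alpha*(1-tau))*((Lg + N*F) + (N*m-alpha)*g)/(alpha + (N*m-alpha)*tau)).
  { unfold L, Lpriv. field. exact HE. }
  cbv zeta. fold L. rewrite HD', HS'.
  field. repeat split; auto.
Qed.

Theorem theorem4 (N m F alpha w : R) :
  0 < N -> 0 < m -> 0 < F -> 0 < alpha -> 0 < w -> alpha < N * m ->
  forall g tau Lg : R, 0 <= g -> 0 < tau < 1 -> 0 <= Lg ->
    (ex_derive (fun g' => profit N m F alpha w g' tau Lg) g /\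
     Derive (fun g' => profit N m F alpha w g' tau Lg) g > 0) /\
    (ex_derive (fun t => profit N m F alpha w g t Lg) tau /\
     Derive (fun t => profit N m F alpha w g t Lg) tau < 0).
Proof.
  intros HN Hm HF Ha Hw HNm g tau Lg Hg [Ht0 Ht1] HLg.
  set (A := Lg + N*F).
  assert (HA : 0 < A) by (unfold A; nra).
  assert (HNm0 : 0 < N*m) by nra.
  split.
  - set (K := N*m + alpha*(1-tau)).
    set (E := alpha + (N*m-alpha)*tau).
    assert (HK : 0 < K) by (unfold K; nra).
    assert (HE : 0 < E) by (unfold E; nra).
    set (eps := A*K/(N*N*m*m + K*(N*m))).
    assert (Heps : 0 < eps).
    { unfold eps. apply Rdiv_lt_0_compat; nra. }
    assert (Hloc : locally g (fun x => w*alpha*((1-tau)*A + N*m*x)^2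
            / (N*(A + (N*m-alpha)*x)*E) - F*w = profit N m F alpha w x tau Lg)).
    { exists (mkposreal eps Heps). intros x Hx.
      change (Rabs (x - g) < eps) in Hx.
      apply Rabs_def2 in Hx. destruct Hx as [_ Hx].
      assert (Hx2 : (N*N*m*m + K*(N*m))*x > - (A*K)).
      { assert (H1 : (N*N*m*m + K*(N*m))*eps = A*K).
        { unfold eps. field. nra. }
        assert (Hc : 0 < N*N*m*m + K*(N*m)) by nra.
        assert (Hgx : 0 < x + eps) by lra.
        assert (0 < (N*N*m*m + K*(N*m))*(x+eps)) by (apply Rmult_lt_0_compat; lra).
        lra. }
      symmetry. unfold A, E. apply profit_closed; fold A; fold E; fold K; try lra.
      + destruct (Rle_lt_dec 0 x); [nra|].
        assert (HKN : 0 < K*(N*m)) by nra.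
        assert (K*(N*m)*x < 0) by nra. lra.
      + destruct (Rle_lt_dec 0 x); [nra|].
        assert (K*(N*m*x) > -(K*A)).
        { assert (HKN : 0 < K*(N*m)) by nra. assert (H4 : 0 < N*N*m*m) by (replace (N*N*m*m) with ((N*m)*(N*m)) by ring; nra).
          assert (N*N*m*m*x < 0) by nra. lra. }
        assert (N*m*x > -A).
        { apply (Rmult_lt_reg_l K); [lra|]. lra. }
        assert (alpha*x < 0) by nra. lra. }
    assert (HB : 0 < A + (N*m-alpha)*g) by nra.
    assert (HC : 0 < (1-tau)*A + N*m*g) by nra.
    assert (Hd : is_derive (fun x => w*alpha*((1-tau)*A + N*m*x)^2
            / (N*(A + (N*m-alpha)*x)*E) - F*w) g
            (w*alpha*((1-tau)*A + N*m*g)*(2*N*m*(A + (N*m-alpha)*g) - (N*m-alpha)*((1-tau)*A + N*m*g))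
              / (N*E*(A + (N*m-alpha)*g)^2))).
    { auto_derive.
      - assert (0 < N * (A + (N * m - alpha) * g) * E) by (apply Rmult_lt_0_compat; [apply Rmult_lt_0_compat|]; lra). lra.
      - field. repeat split; lra. }
    assert (Hd' := is_derive_ext_loc _ _ _ _ Hloc Hd).
    split.
    + eexists; exact Hd'.
    + erewrite is_derive_unique; [|exact Hd'].
      apply Rdiv_lt_0_compat.
      * apply Rmult_lt_0_compat.
        -- apply Rmult_lt_0_compat; [apply Rmult_lt_0_compat|]; lra.
        -- assert (H1 : 0 <= N*m*(N*m-alpha)*g) by (apply Rmult_le_pos; [apply Rmult_le_pos|]; lra).
           assert (H2 : 0 < A*(2*N*m - (N*m-alpha)*(1-tau))).
           { apply Rmult_lt_0_compat; [lra|]. assert ((N*m-alpha)*(1-tau) < N*m) by nra. lra. }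
           replace (2 * N * m * (A + (N * m - alpha) * g) - (N * m - alpha) * ((1 - tau) * A + N * m * g))
             with (A*(2*N*m - (N*m-alpha)*(1-tau)) + N*m*(N*m-alpha)*g) by ring. lra.
      * apply Rmult_lt_0_compat; [apply Rmult_lt_0_compat|]; try lra. apply pow_lt; lra.
  - set (B := A + (N*m-alpha)*g).
    assert (HB : 0 < B) by (unfold B; nra).
    set (eps := Rmin tau (1-tau)).
    assert (Heps : 0 < eps) by (unfold eps; apply Rmin_glb_lt; lra).
    assert (Hloc : locally tau (fun t => w*alpha*((1-t)*A + N*m*g)^2
            / (N*B*(alpha + (N*m-alpha)*t)) - F*w = profit N m F alpha w g t Lg)).
    { exists (mkposreal eps Heps). intros x Hx.
      change (Rabs (x - tau) < eps) in Hx.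
      apply Rabs_def2 in Hx. destruct Hx as [Hx1 Hx2].
      assert (eps <= tau) by apply Rmin_l.
      assert (eps <= 1-tau) by apply Rmin_r.
      assert (0 < x < 1) by lra.
      assert (0 < (N*m-alpha)*x) by (apply Rmult_lt_0_compat; lra).
      assert (0 < alpha*(1-x)) by (apply Rmult_lt_0_compat; lra).
      assert (0 <= N*N*m*m*g) by (replace (N*N*m*m*g) with ((N*m)*(N*m)*g) by ring; apply Rmult_le_pos; [apply Rmult_le_pos|]; lra).
      assert (0 < (N*m + alpha*(1-x))*A) by (apply Rmult_lt_0_compat; lra).
      symmetry. unfold A, B. apply profit_closed; fold A; fold B; lra. }
    assert (HE : 0 < alpha + (N*m-alpha)*tau) by nra.
    assert (HC : 0 < (1-tau)*A + N*m*g) by nra.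
    assert (Hd : is_derive (fun t => w*alpha*((1-t)*A + N*m*g)^2
            / (N*B*(alpha + (N*m-alpha)*t)) - F*w) tau
            (- (w*alpha*((1-tau)*A + N*m*g)*(2*A*(alpha + (N*m-alpha)*tau) + (N*m-alpha)*((1-tau)*A + N*m*g)))
              / (N*B*(alpha + (N*m-alpha)*tau)^2))).
    { auto_derive.
      - assert (0 < N*B*(alpha + (N*m-alpha)*tau)) by (apply Rmult_lt_0_compat; [apply Rmult_lt_0_compat|]; lra). lra.
      - field. repeat split; lra. }
    assert (Hd' := is_derive_ext_loc _ _ _ _ Hloc Hd).
    split.
    + eexists; exact Hd'.
    + erewrite is_derive_unique; [|exact Hd'].
      unfold Rdiv. rewrite Ropp_mult_distr_l_reverse.
      apply Ropp_lt_gt_0_contravar.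
      apply Rmult_lt_0_compat.
      * apply Rmult_lt_0_compat.
        -- apply Rmult_lt_0_compat; [apply Rmult_lt_0_compat|]; lra.
        -- assert (0 < 2*A*(alpha + (N*m-alpha)*tau)) by (apply Rmult_lt_0_compat; lra).
           assert (0 < (N*m-alpha)*((1-tau)*A + N*m*g)) by (apply Rmult_lt_0_compat; lra).
           lra.
      * apply Rinv_0_lt_compat. apply Rmult_lt_0_compat; [apply Rmult_lt_0_compat|]; try lra. apply pow_lt; lra.
Qed.
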